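(* Let $z_1,\dots,z_m\in\mathbb C$ and let $T$ be a spanning tree on the vertex set $\{z_1,\dots,z_m\}$ (edges being segments $e$ with endpoints $e^-,e^+$) such that for all $i,j$, $|z_i-z_j|$ is within a multiplicative constant $c\ge1$ of the length (sum of $|e^+-e^-|$ over edges) of the path in $T$ connecting $z_i$ and $z_j$. For a point $z_p$ and an edge $e$ let $d_+(z_p,e)=\max(|z_p-e^-|,|z_p-e^+|)$. Then $$\prod_{e\in T}\prod_{p=1}^m d_+(z_p,e)^{1/2}\le C\prod_{i<j}|z_i-z_j|,$$ where $C$ depends only on $m$ (and $c$). *)

(* Defs.v *)
From HB Require Import structures.
From mathcomp Require Import all_boot all_order all_algebra.
From mathcomp Require Import complex.
From mathcomp Require Import reals.
Set Implicit Arguments. Unset Strict Implicit. Unset Printing Implicit Defensive.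
Import Order.TTheory GRing.Theory Num.Theory.
Local Open Scope ring_scope.

Section TreeDefs.
Variable m : nat.

(* An (oriented) edge e = (e^-, e^+) is a pair of vertex indices. *)
Definition edge := ('I_m * 'I_m)%type.

Definition adj (E : seq edge) : rel 'I_m :=
  fun x y => ((x, y) \in E) || ((y, x) \in E).

Definition simple_edges (E : seq edge) : bool :=
  all (fun e => e.1 != e.2) E && uniq [seq [set e.1; e.2] | e <- E].

Definition connectedE (E : seq edge) : Prop :=
  forall x y : 'I_m, exists p : seq 'I_m, path (adj E) x p /\ last x p = y.

Definition acyclicE (E : seq edge) : Prop :=
  forall s : seq 'I_m, uniq s -> (3 <= size s)%N -> ~~ cycle (adj E) s.

Definition spanning_tree (E : seq edge) : Prop :=
  simple_edges E /\ connectedE E /\ acyclicE E.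

End TreeDefs.

Section Geom.
Variable R : realType.
Variable m : nat.
Variable z : 'I_m -> R[i].

Definition cdist (a b : R[i]) : R := Normc.normc (a - b).

Definition plen (x : 'I_m) (p : seq 'I_m) : R :=
  \sum_(d <- pairmap (fun a b => cdist (z a) (z b)) x p) d.

Definition dplus (w : R[i]) (e : edge m) : R :=
  Num.max (cdist w (z e.1)) (cdist w (z e.2)).

End Geom.

(* Main.v *)
Require Import Defs.
From HB Require Import structures.
From mathcomp Require Import all_boot all_order all_algebra.
From mathcomp Require Import complex.
From mathcomp Require Import reals.
Set Implicit Arguments. Unset Strict Implicit. Unset Printing Implicit Defensive.
Import Order.TTheory GRing.Theory Num.Theory.
Local Open Scope ring_scope.

Definition Te m (T : seq (edge m)) (e : edge m) :=
  [seq f <- T | [set f.1; f.2] != [set e.1; e.2]].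

Lemma adjC m (E : seq (edge m)) : symmetric (adj E).
Proof. by move=> x y; rewrite /adj orbC. Qed.

Lemma connectC m (E : seq (edge m)) x y : connect (adj E) x y = connect (adj E) y x.
Proof. by apply: sym_connect_sym; apply: adjC. Qed.

Lemma adj_Te m (T : seq (edge m)) e : subrel (adj (Te T e)) (adj T).
Proof. by move=> x y; rewrite /adj !mem_filter => /orP[/andP[_ ->]|/andP[_ ->]]; rewrite ?orbT. Qed.

Lemma adj_notTe m (T : seq (edge m)) e x y :
  adj T x y -> ~~ adj (Te T e) x y -> (x == e.1) || (x == e.2).
Proof.
rewrite /adj !mem_filter /= => /orP[]H; rewrite H ?andbT ?orbT negb_or => /andP[/negPn/eqP E1 /negPn/eqP E2].
- by rewrite -in_set2 -E1 !inE eqxx.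
- by rewrite -in_set2 -E2 !inE eqxx orbT.
Qed.

Lemma adj_Te_avoid m (T : seq (edge m)) e r x y :
  (r == e.1) || (r == e.2) -> x != r -> y != r -> adj T x y -> adj (Te T e) x y.
Proof.
move=> Hr xr yr; rewrite /adj !mem_filter /=.
have Hn : forall a b, a != r -> b != r -> [set a; b] != [set e.1; e.2].
  move=> a b ar br; apply/negP => /eqP E.
  have : r \in [set e.1; e.2] by rewrite !inE.
  by rewrite -E !inE eq_sym (negPf ar) eq_sym (negPf br).
by rewrite !Hn.
Qed.

Lemma uniq_map_inj (A B : eqType) (f : A -> B) (s : seq A) x y :
  uniq (map f s) -> x \in s -> y \in s -> f x = f y -> x = y.
Proof.
elim: s => //= a s IH /andP[Hn Hu]; rewrite !inE => /orP[/eqP->|xs] /orP[/eqP->|ys] E //.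
- by move: Hn; rewrite E (map_f f ys).
- by move: Hn; rewrite -E (map_f f xs).
- exact: IH.
Qed.

Lemma tree_sep m (T : seq (edge m)) e : spanning_tree T -> e \in T ->
  ~~ connect (adj (Te T e)) e.1 e.2.
Proof.
case: e => a b [/andP[Hl Hu] [Hc Ha]] eT /=.
have ab : a != b by have := allP Hl _ eT.
apply/negP => /connectP [p Hp Hlast]; move: Hlast.
case: (shortenP Hp) => p' Hp' Up' _ Hlast.
case: p' Hp' Up' Hlast => [|y [|y' p'']] Hp' Up' Hlast.
- by move: ab; rewrite Hlast eqxx.
- move: Hp'; rewrite /= andbT Hlast /adj !mem_filter /= setUC eqxx /=.
  by [].
- have := Ha [:: a, y, y' & p''] Up' isT; apply/negP; apply/negPn.
  rewrite /cycle rcons_path; apply/andP; split.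
    exact: (sub_path (@adj_Te m T (a, b)) Hp').
  by rewrite -Hlast /adj eT orbT.
Qed.

Lemma tree_cover m (T : seq (edge m)) e q : spanning_tree T ->
  connect (adj (Te T e)) q e.1 || connect (adj (Te T e)) q e.2.
Proof.
move=> [_ [Hc _]]; have [p [Hp Hl]] := Hc q e.1.
elim: p q Hp Hl => [|x p IH] q /=; first by move=> _ ->; rewrite connect0.
move=> /andP[Hqx Hp] Hl.
have /orP[H|H] := IH x Hp Hl.
- case Hq: (adj (Te T e) q x).
    by rewrite (connect_trans (connect1 Hq) H).
  by move: (adj_notTe Hqx (negbT Hq)) => /orP[]/eqP->; rewrite connect0 ?orbT.
- case Hq: (adj (Te T e) q x).
    by rewrite (connect_trans (connect1 Hq) H) orbT.
  by move: (adj_notTe Hqx (negbT Hq)) => /orP[]/eqP->; rewrite connect0 ?orbT.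
Qed.

Definition far m (T : seq (edge m)) (e : edge m) q :=
  if connect (adj (Te T e)) q e.1 then e.2 else e.1.
Definition oth m (T : seq (edge m)) (e : edge m) q :=
  if connect (adj (Te T e)) q e.1 then e.1 else e.2.

Lemma far_spec m (T : seq (edge m)) e q : spanning_tree T -> e \in T ->
  [/\ connect (adj (Te T e)) q (oth T e q), ~~ connect (adj (Te T e)) q (far T e q),
      (far T e q == e.1) || (far T e q == e.2) &
      [set far T e q; oth T e q] = [set e.1; e.2]].
Proof.
move=> HT eT; have Hs := tree_sep HT eT; have Hc := tree_cover e q HT.
rewrite /far /oth; case: ifP => H.
- split => //; rewrite ?eqxx ?orbT //; last by rewrite setUC.
  by apply/negP => H2; move: Hs; rewrite (connect_trans _ H2) // connectC.
- rewrite H /= in Hc; split => //; rewrite ?eqxx //.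
  by rewrite H.
Qed.

Lemma cdist_ge0 (R : realType) (a b : R[i]) : 0 <= cdist a b.
Proof. by rewrite /cdist /Normc.normc; case: (a - b) => x y; rewrite sqrtr_ge0. Qed.

Lemma cdistC (R : realType) (a b : R[i]) : cdist a b = cdist b a.
Proof. by rewrite /cdist -normcN opprB. Qed.

Lemma plen_rcons (R : realType) m (z : 'I_m -> R[i]) x p r :
  plen z x (rcons p r) = plen z x p + cdist (z (last x p)) (z r).
Proof.
rewrite /plen -cats1 pairmap_cat big_cat /= big_seq1 //.
Qed.

Lemma adj_set m (T : seq (edge m)) (e : edge m) x y : e \in T -> x != y ->
  [set x; y] = [set e.1; e.2] -> adj T x y.
Proof.
case: e => a b eT xy /= Hset.
have : x \in [set a; b] by rewrite -Hset !inE eqxx.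
have : y \in [set a; b] by rewrite -Hset !inE eqxx orbT.
rewrite !inE /adj => /orP[]/eqP Ey /orP[]/eqP Ex; subst;
  by rewrite ?eqxx in xy; rewrite ?eT ?orbT.
Qed.

Lemma far_ineq (R : realType) m (c : R) (z : 'I_m -> R[i]) (T : seq (edge m)) e q :
  spanning_tree T -> e \in T ->
  (forall (i j : 'I_m) (p : seq 'I_m),
        path (adj T) i p -> last i p = j -> uniq (i :: p) ->
        cdist (z i) (z j) <= plen z i p <= c * cdist (z i) (z j)) ->
  dplus z (z q) e <= c * cdist (z q) (z (far T e q)).
Proof.
move=> HT eT Hyp.
have [Hs Hr Hfe Hset] := far_spec q HT eT.
set r := far T e q in Hr Hfe Hset *; set s := oth T e q in Hs Hset *.
have rs : s != r by apply: contraNneq Hr => <-.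
move: Hs => /connectP [p0 Hp0 Hl0]; move: Hl0.
case: (shortenP Hp0) => p Hp Up _ Hl.
have rp : r \notin q :: p.
  by apply/negP => /(path_connect Hp) H; rewrite H in Hr.
have HpT : path (adj T) q p by exact: (sub_path (@adj_Te m T e) Hp).
have Hsr : adj T s r by apply: (adj_set eT rs); rewrite setUC.
have H1 := Hyp q s p HpT (esym Hl) Up.
have H2 := Hyp q r (rcons p r).
rewrite rcons_path HpT -Hl Hsr last_rcons -rcons_cons rcons_uniq rp Up in H2.
have {H2} /andP[H2 H3] := H2 isT erefl isT.
move: H3; rewrite plen_rcons => H3.
have H4 := cdist_ge0 (z (last q p)) (z r).
move/andP: H1 => [H1 H5].
have Hq1 : cdist (z q) (z s) <= c * cdist (z q) (z r).
  by apply: (le_trans H1); apply: le_trans _ H3; rewrite lerDl cdist_ge0.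
have Hq2 : cdist (z q) (z r) <= c * cdist (z q) (z r).
  by apply: (le_trans H2); rewrite plen_rcons.
have E1 : (e.1 == r) || (e.1 == s) by rewrite -in_set2 Hset !inE eqxx.
have E2 : (e.2 == r) || (e.2 == s) by rewrite -in_set2 Hset !inE eqxx orbT.
rewrite /dplus ge_max.
by case/orP: E1 => /eqP ->; case/orP: E2 => /eqP ->; rewrite ?Hq1 ?Hq2.
Qed.



Lemma avoid_path m (T : seq (edge m)) e r x p :
  (r == e.1) || (r == e.2) -> r \notin x :: p -> path (adj T) x p ->
  path (adj (Te T e)) x p.
Proof.
move=> Hr rp; apply: (@sub_in_path _ (predC1 r)).
  by move=> a b /= ar br; apply: adj_Te_avoid Hr ar br.
by apply/allP => y /= yp; apply: contraNneq rp => <-.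
Qed.

Lemma far_inj m (T : seq (edge m)) e e' q : spanning_tree T -> e \in T -> e' \in T ->
  far T e q = far T e' q -> e = e'.
Proof.
move=> HT eT e'T Hf.
have [Hs Hr Hfe Hset] := far_spec q HT eT.
have [Hs' Hr' Hfe' Hset'] := far_spec q HT e'T.
rewrite -Hf in Hr' Hfe' Hset'.
set r := far T e q in Hr Hfe Hset Hr' Hfe' Hset' *.
set s := oth T e q in Hs Hset *; set s' := oth T e' q in Hs' Hset' *.
have ss : s = s'.
  apply/eqP/negP => /negP ss.
  move: (Hs') => /connectP [p0 Hp0 Hl0]; move: Hl0.
  case: (shortenP Hp0) => p Hp Up _ Hl.
  have rp : r \notin q :: p.
    by apply/negP => /(path_connect Hp) H; rewrite H in Hr'.
  have Hp2 : path (adj (Te T e)) q p.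
    exact: (avoid_path Hfe rp (sub_path (@adj_Te m T e') Hp)).
  have C1 : connect (adj (Te T e)) q s' by apply/connectP; exists p.
  have rs' : s' != r by apply: contraNneq Hr' => <-.
  have Hadj : adj T s' r by apply: (adj_set e'T rs'); rewrite setUC.
  have rs : s' != s by rewrite eq_sym.
  have s'r : s' != r by [].
  have A2 : adj (Te T e) s' r.
    have E : (s == e.1) || (s == e.2) by rewrite -in_set2 -Hset !inE eqxx orbT.
    have rs2 : r != s by apply: contraNneq Hr => ->.
    exact: (adj_Te_avoid E rs rs2 Hadj).
  by move: Hr; rewrite (connect_trans C1 (connect1 A2)).
have Hu : uniq [seq [set e.1; e.2] | e <- T] by case: HT => /andP[].
apply: (uniq_map_inj Hu eT e'T).
by rewrite /= -Hset -Hset' ss.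
Qed.

Lemma far_surj m (T : seq (edge m)) q r : spanning_tree T -> q != r ->
  exists2 e, e \in T & far T e q = r.
Proof.
move=> HT qr; have [_ [Hc _]] := HT.
have [p0 [Hp0 Hl0]] := Hc q r; move: Hl0.
case: (shortenP Hp0) => p Hp Up _ Hl.
case/lastP: p Hp Up Hl => [|p s] Hp Up Hl; first by rewrite -Hl eqxx in qr.
rewrite last_rcons in Hl; subst r.
move: Hp; rewrite rcons_path => /andP[Hp Hadj].
move: Up; rewrite -rcons_cons rcons_uniq => /andP[sp Up].
set t := last q p in Hadj.
have Hst : forall e, e \in T -> (e.1 == s) || (e.2 == s) ->
    connect (adj (Te T e)) q t.
  move=> e eT Es; apply/connectP; exists p => //.
  apply: (@avoid_path m T e s) => //; by rewrite eq_sym orbC eq_sym orbC.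
move: Hadj; rewrite /adj => /orP[] He.
- by exists (t, s) => //; rewrite /far /= Hst //= eqxx orbT.
- exists (s, t) => //; rewrite /far /=.
  case: ifP => // H.
  have [_ Hr _ Hset] := far_spec q HT He.
  move: Hr; rewrite /far /= H /=.
  by rewrite (Hst _ He) //= eqxx.
Qed.

Lemma pairs_split (R : realType) m (G : 'I_m * 'I_m -> R) :
  \prod_(y : 'I_m * 'I_m | y.1 != y.2) G y =
  \prod_(y : 'I_m * 'I_m | (y.1 < y.2)%N) (G y * G (y.2, y.1)).
Proof.
rewrite big_split /= (bigID (fun y : 'I_m * 'I_m => (y.1 < y.2)%N)) /=.
congr (_ * _).
  by apply: eq_bigl => y; rewrite andb_idl // => H; rewrite neq_ltn H.
rewrite (reindex_inj (h := fun y : 'I_m * 'I_m => (y.2, y.1))) /=.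
  by apply: eq_bigl => -[a b] /=; rewrite neq_ltn; case: ltngtP.
by move=> [a b] [a' b'] [-> ->].
Qed.

Theorem lemmaA5 (R : realType) (m : nat) (c : R) (hc : 1 <= c) :
  exists C : R, 0 < C /\
  forall (z : 'I_m -> R[i]) (T : seq (edge m)),
    spanning_tree T ->
    (forall (i j : 'I_m) (p : seq 'I_m),
        path (adj T) i p -> last i p = j -> uniq (i :: p) ->
        cdist (z i) (z j) <= plen z i p <= c * cdist (z i) (z j)) ->
    \prod_(e <- T) \prod_(q < m) Num.sqrt (dplus z (z q) e)
      <= C * \prod_(i < m) \prod_(j < m | (i < j)%N) cdist (z i) (z j).
Proof.
have c0 : 0 < c by apply: lt_le_trans hc.
exists (\prod_(i < m) \prod_(j < m | (i < j)%N) c); split.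
  by apply: prodr_gt0 => i _; apply: prodr_gt0.
move=> z T HT Hyp.
pose G (y : 'I_m * 'I_m) := Num.sqrt (c * cdist (z y.1) (z y.2)).
have Hu : uniq T by case: HT => /andP[_ /map_uniq].
apply: (@le_trans _ _ (\prod_(e <- T) \prod_(q < m) G (q, far T e q))).
  rewrite big_seq [X in _ <= X]big_seq; apply: ler_prod => e eT.
  rewrite prodr_ge0 /=; last by move=> i _; rewrite sqrtr_ge0.
  apply: ler_prod => q _; rewrite sqrtr_ge0 /= ler_wsqrtr //.
  exact: far_ineq.
rewrite big_uniq //= pair_big_dep /=.
pose S := [set x : edge m * 'I_m | x.1 \in T].
pose psi (x : edge m * 'I_m) := (x.2, far T x.1 x.2).
have -> : \prod_(p | (p.1 \in T) && true) G (p.2, far T p.1 p.2) = \prod_(x in S) G (psi x).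
  by apply: eq_bigl => x; rewrite !inE andbT.
rewrite -big_imset /=; last first.
  move=> [e q] [e' q'] /=; rewrite !inE /= => eT e'T [<- Hf].
  by rewrite (far_inj HT eT e'T Hf).
have -> : psi @: S = [set y : 'I_m * 'I_m | y.1 != y.2].
  apply/setP => y; rewrite !inE; apply/imsetP/idP.
    move=> [[e q]]; rewrite inE /= => eT -> /=.
    have [_ Hr _ _] := far_spec q HT eT.
    by apply: contraNneq Hr => <-; rewrite connect0.
  case: y => q r /= qr; have [e eT Hf] := far_surj HT qr.
  by exists (e, q); rewrite ?inE //= /psi /= Hf.
rewrite (eq_bigl (fun y : 'I_m * 'I_m => y.1 != y.2)); last by move=> y; rewrite inE.
rewrite pairs_split.
have -> : \prod_(y : 'I_m * 'I_m | (y.1 < y.2)%N) (G y * G (y.2, y.1)) =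
          \prod_(y : 'I_m * 'I_m | (y.1 < y.2)%N) (c * cdist (z y.1) (z y.2)).
  apply: eq_bigr => y _; rewrite /G /= [cdist (z y.2) _]cdistC -expr2 sqr_sqrtr //.
  by rewrite mulr_ge0 ?cdist_ge0 // ltW.
rewrite -(pair_big_dep xpredT (fun i j : 'I_m => (i < j)%N) (fun i j : 'I_m => c * cdist (z i) (z j))) /=.
rewrite le_eqVlt; apply/orP; left; apply/eqP.
rewrite -big_split /=; apply: eq_bigr => i _; by rewrite big_split.
Qed.
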